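(* Let $R\subset S$ be a distributive FCP ring extension with Loewy series $\{S_i\}_{i=0}^n$. Then $R\subset S$ is a $\mathcal P$-extension if and only if the following condition holds: for every $T\in[R,S]$ with $T\neq R$, $T$ is $\Pi$-irreducible in $[R,S]$ if and only if there exists some $i\in\{0,\ldots,n-1\}$ such that $T$ is an atom of $[S_i,S_{i+1}]$.
   Context: All rings are commutative with identity. $[R,S]$ is the lattice of $R$-subalgebras of $S$ (meet = intersection, join = product $TU$). FCP: every chain in $[R,S]$ is finite. $T\subset U$ minimal means $[T,U]=\{T,U\}$; an atom of $[A,B]$ is $T$ with $A\subset T$ minimal and $T\subseteq B$; the socle $\mathcal S[A,B]$ is the product of all atoms of $[A,B]$. Loewy series: $S_0=R$, $S_{i+1}=\mathcal S[S_i,S]$ while $S_i\neq S$, $n$ least with $S_n=S$. The extension is a $\mathcal P$-extension if $[R,S]=\bigcup_{i=0}^{n-1}[S_i,S_{i+1}]$. Distributive: $[R,S]$ is a distributive lattice. An element $T\in[R,S]$ is $\Pi$-irreducible if $T=T_1T_2$ with $T_1,T_2\in[R,S]$ implies $T=T_1$ or $T=T_2$. *)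

(* Defs.v *)
(* Subsets of the ambient ring S are Prop-valued predicates
   (S -> Prop); equality of subalgebras is Leibniz equality of predicates. *)
From mathcomp Require Import all_boot all_algebra.
From Stdlib Require List.
Set Implicit Arguments. Unset Strict Implicit. Unset Printing Implicit Defensive.
Import GRing.Theory.
Local Open Scope ring_scope.

Section RingExt.
Variable S : comPzRingType.

Definition ssubset (A B : S -> Prop) : Prop := forall x, A x -> B x.

Definition is_subring (A : S -> Prop) : Prop :=
  [/\ A 1, (forall x y, A x -> A y -> A (x - y)) & (forall x y, A x -> A y -> A (x * y))].

(* [A,B] : subrings T with A ⊆ T ⊆ B (for A a subring these are the
   A-subalgebras of B). *)
Definition ivl (A B : S -> Prop) (T : S -> Prop) : Prop :=
  [/\ is_subring T, ssubset A T & ssubset T B].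

Definition gen (X : S -> Prop) : S -> Prop :=
  fun x => forall B, is_subring B -> ssubset X B -> B x.

Definition sprod (T U : S -> Prop) : S -> Prop := gen (fun x => T x \/ U x).

Definition smeet (T U : S -> Prop) : S -> Prop := fun x => T x /\ U x.

Definition top : S -> Prop := fun _ => True.

Definition FCP (R : S -> Prop) : Prop :=
  forall C : (S -> Prop) -> Prop,
    (forall T, C T -> ivl R top T) ->
    (forall T U, C T -> C U -> ssubset T U \/ ssubset U T) ->
    exists l : list (S -> Prop), forall T, C T -> List.In T l.

Definition minimal_ext (T U : S -> Prop) : Prop :=
  [/\ ssubset T U, T <> U &
      forall V, ivl T U V -> V = T \/ V = U].

Definition is_atom (A B T : S -> Prop) : Prop :=
  is_subring T /\ minimal_ext A T /\ ssubset T B.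

(* Socle of [A,B]: the product (in [A,B]) of all atoms of [A,B]; the empty
   product is the bottom element A. *)
Definition socle (A B : S -> Prop) : S -> Prop :=
  gen (fun x => A x \/ exists T, is_atom A B T /\ T x).

Fixpoint loewy (R : S -> Prop) (i : nat) : S -> Prop :=
  match i with
  | O => R
  | i'.+1 => socle (loewy R i') top
  end.

Definition distributive_ext (R : S -> Prop) : Prop :=
  forall T U V, ivl R top T -> ivl R top U -> ivl R top V ->
    smeet T (sprod U V) = sprod (smeet T U) (smeet T V).

(* P-extension, for Loewy length n: [R,S] = ⋃_{i<n} [S_i, S_{i+1}]. *)
Definition P_ext (R : S -> Prop) (n : nat) : Prop :=
  forall T, ivl R top T ->
    exists i, (i < n)%N /\ ivl (loewy R i) (loewy R i.+1) T.

Definition Pi_irreducible (R T : S -> Prop) : Prop :=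
  forall T1 T2, ivl R top T1 -> ivl R top T2 ->
    T = sprod T1 T2 -> T = T1 \/ T = T2.

End RingExt.

(* Main.v *)
Require Import Defs.
From mathcomp Require Import all_boot all_algebra.
From Stdlib Require Import FunctionalExtensionality PropExtensionality Classical ClassicalEpsilon.
From Stdlib Require List FinFun.
Unset Implicit Arguments.

Section Aux.
Variable S : comPzRingType.
Implicit Types A B C D T U V W : S -> Prop.

Lemma pext A B : ssubset A B -> ssubset B A -> A = B.
Proof.
move=> h1 h2; apply: functional_extensionality => x.
apply: propositional_extensionality; split; [apply h1|apply h2].
Qed.

Lemma ss_refl A : ssubset A A. Proof. by move=> x. Qed.
Lemma ss_trans {A B C} : ssubset A B -> ssubset B C -> ssubset A C.
Proof. by move=> h1 h2 x /h1 /h2. Qed.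

Lemma gen_subring (X : S -> Prop) : is_subring (gen X).
Proof.
split.
- by move=> B [h1 _ _] _.
- move=> x y hx hy B hB hXB; case: (hB) => _ hs _; apply: hs; [exact: hx|exact: hy].
- move=> x y hx hy B hB hXB; case: (hB) => _ _ hs; apply: hs; [exact: hx|exact: hy].
Qed.

Lemma gen_incl {X : S -> Prop} : ssubset X (gen X).
Proof. by move=> x hx B _ h; apply: h. Qed.

Lemma gen_min {X : S -> Prop} {B} : is_subring B -> ssubset X B -> ssubset (gen X) B.
Proof. by move=> hB h x hx; apply: hx. Qed.

Lemma sprod_l {T U} : ssubset T (sprod T U).
Proof. by move=> x hx; apply: gen_incl; left. Qed.
Lemma sprod_r {T U} : ssubset U (sprod T U).
Proof. by move=> x hx; apply: gen_incl; right. Qed.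
Lemma sprod_min {T U B} : is_subring B -> ssubset T B -> ssubset U B ->
  ssubset (sprod T U) B.
Proof. by move=> hB h1 h2; apply: gen_min => // x [/h1|/h2]. Qed.
Lemma sprod_subring T U : is_subring (sprod T U).
Proof. exact: gen_subring. Qed.

Lemma smeet_subring {T U} : is_subring T -> is_subring U -> is_subring (smeet T U).
Proof.
case=> a1 a2 a3 [b1 b2 b3]; split => //.
- by move=> x y [h1 h2] [h3 h4]; split; auto.
- by move=> x y [h1 h2] [h3 h4]; split; auto.
Qed.

Definition sd (b : bool) A B := if b then ssubset A B else ssubset B A.

Lemma sd_refl {b A} : sd b A A. Proof. by case: b; apply: ss_refl. Qed.
Lemma sd_trans {b A B C} : sd b A B -> sd b B C -> sd b A C.
Proof. by case: b => /= h1 h2; [apply: ss_trans h1 h2|apply: ss_trans h2 h1]. Qed.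
Lemma sd_anti {b A B} : sd b A B -> sd b B A -> A = B.
Proof. by case: b => /= h1 h2; apply: pext. Qed.
Lemma sd_comp {b A B} : sd b A B -> ssubset A B \/ ssubset B A.
Proof. by case: b => /= h; [left|right]. Qed.

Lemma fcp_wf (R : S -> Prop) (b : bool) : FCP R -> forall P : (S -> Prop) -> Prop,
  (forall W, ivl R (@top S) W ->
     (forall W', ivl R (@top S) W' -> sd b W W' -> W <> W' -> P W') -> P W) ->
  forall W, ivl R (@top S) W -> P W.
Proof.
move=> hF P hP W0 hW0; apply: NNPP => hn.
pose A := {W | ivl R (@top S) W /\ ~ P W}.
have step : forall a : A, exists a' : A, sd b (sval a) (sval a') /\ sval a <> sval a'.
  case=> W [hW hnW] /=.
  apply: NNPP => hne; apply: hnW; apply: hP => // W' hW' hsd hneq.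
  apply: NNPP => hnP; apply: hne; by exists (exist _ W' (conj hW' hnP)).
pose next (a : A) : A := proj1_sig (constructive_indefinite_description _ (step a)).
have hnext a : sd b (sval a) (sval (next a)) /\ sval a <> sval (next a).
  exact: (proj2_sig (constructive_indefinite_description _ (step a))).
pose a0 : A := exist _ W0 (conj hW0 hn).
pose f k := sval (iter k next a0).
have fS k : sd b (f k) (f k.+1) /\ f k <> f k.+1 by exact: hnext.
have fmono i k : sd b (f i) (f (i + k)).
  elim: k => [|k IH]; first by rewrite addn0; apply: sd_refl.
  by rewrite addnS; apply: sd_trans IH (fS _).1.
have finj i j : (i < j)%N -> f i <> f j.
  move=> hij heq; have h1 := fmono i.+1 (j - i.+1).
  rewrite subnKC // -heq in h1.
  exact: (fS i).2 (sd_anti (fS i).1 h1).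
have finj' : FinFun.Injective f.
  move=> i j h; case: (ltngtP i j) => // hij.
  - by case: (finj _ _ hij h).
  - by case: (finj _ _ hij (esym h)).
have [l hl] : exists l : list (S -> Prop), forall T, (exists k, T = f k) -> List.In T l.
  apply: hF.
  - by move=> T [k ->]; exact: (proj1 (proj2_sig (iter k next a0))).
  - move=> T U [i ->] [j ->]; case: (leqP i j) => h.
    + by apply: (@sd_comp b); have := fmono i (j - i); rewrite subnKC.
    + apply/or_comm; apply: (@sd_comp b).
      by have := fmono j (i - j); rewrite subnKC // ltnW.
have hnd := FinFun.Injective_map_NoDup finj' (List.seq_NoDup (length l).+1 0).
have hinc : List.incl (List.map f (List.seq 0 (length l).+1)) l.
  by move=> x /List.in_map_iff [k [<- _]]; apply: hl; exists k.
have := List.NoDup_incl_length hnd hinc.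
rewrite List.length_map List.length_seq => /leP; by rewrite ltnn.
Qed.

Fixpoint F D (l : list (S -> Prop)) : S -> Prop :=
  match l with nil => D | A :: l' => sprod (F D l') A end.

Lemma F_subring D l : is_subring D -> is_subring (F D l).
Proof. by case: l => [|A l] //= _; apply: sprod_subring. Qed.

Lemma F_incl {D l} : ssubset D (F D l).
Proof. elim: l => [|A l IH] /=; first exact: ss_refl. exact: ss_trans IH (sprod_l). Qed.

Lemma F_le {D l B} : is_subring B -> ssubset D B ->
  (forall A, List.In A l -> ssubset A B) -> ssubset (F D l) B.
Proof.
move=> hB hD; elim: l => [|A l IH] //= h.
apply: sprod_min => //; last by apply: h; left.
by apply: IH => A' hA'; apply: h; right.
Qed.

Section WithR.
Variable R : S -> Prop.
Hypothesis hR : is_subring R.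

Lemma socle_fin {D} : FCP R -> ivl R (@top S) D ->
  exists l, (forall A, List.In A l -> is_atom D (@top S) A) /\ socle D (@top S) = F D l.
Proof.
move=> hF hDL; case: (hDL) => hDs hRD _.
have main : forall W, ivl R (@top S) W ->
  (exists l, (forall A, List.In A l -> is_atom D (@top S) A) /\ W = F D l) ->
  exists l, (forall A, List.In A l -> is_atom D (@top S) A) /\
     (forall A, is_atom D (@top S) A -> ssubset A (F D l)).
  apply: (@fcp_wf R true hF (fun W => (exists l, (forall A, List.In A l -> is_atom D (@top S) A) /\ W = F D l) ->
  exists l, (forall A, List.In A l -> is_atom D (@top S) A) /\
     (forall A, is_atom D (@top S) A -> ssubset A (F D l)))) => W hW IH [l [hl eW]]; subst W.
  case: (classic (forall A, is_atom D (@top S) A -> ssubset A (F D l))) => hall.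
    by exists l.
  have [A hA] : exists A, ~ (is_atom D (@top S) A -> ssubset A (F D l)).
    by apply: NNPP => hne; apply: hall => A; apply: NNPP => h; apply: hne; exists A.
  have hAt : is_atom D (@top S) A by apply: NNPP => h; apply: hA.
  have hnA : ~ ssubset A (F D l) by move=> h; apply: hA.
  apply: (IH (F D (A :: l))).
  - case: hW => _ hRW _; split => //; first exact: sprod_subring.
    exact: ss_trans hRW (sprod_l).
  - exact: sprod_l.
  - by move=> e; apply: hnA; rewrite [X in ssubset _ X]e; apply: sprod_r.
  - exists (A :: l); split => //. by move=> A' [<-|/hl].
have [l [hl hall]] := main D hDL (ex_intro _ nil (conj (fun A (h : List.In A nil) => False_ind _ h) erefl)).
exists l; split => //; apply: pext.
- apply: gen_min; first exact: F_subring.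
  by move=> x [/F_incl|[A [hA hx]]] //; apply: hall hA _ hx.
- apply: F_le; first exact: gen_subring.
  + by move=> x hx; apply: gen_incl; left.
  + by move=> A /hl hA x hx; apply: gen_incl; right; exists A.
Qed.

Lemma irr_atom {D T l} : distributive_ext R -> ivl R (@top S) D ->
  (forall A, List.In A l -> is_atom D (@top S) A) ->
  ivl R (@top S) T -> Pi_irreducible R T -> ssubset D T -> T <> D ->
  ssubset T (F D l) -> exists A, List.In A l /\ T = A.
Proof.
move=> hdist hDL; case: (hDL) => hDs hRD _.
move=> hl hT hirr hDT hTD; case: (hT) => hTs hRT _.
elim: l hl => [|A l IH] hl /=.
  by move=> h; case: hTD; apply: pext.
move=> hTF.
have [hAs [[hDA hDnA hmin] _]] := hl A (or_introl erefl).
have hFL : ivl R (@top S) (F D l).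
  split => //; [exact: F_subring | exact: ss_trans hRD (F_incl)].
have hAL : ivl R (@top S) A by split => //; exact: ss_trans hRD hDA.
have e1 : T = smeet T (sprod (F D l) A).
  by apply: pext => x hx; [split => //; apply: hTF | case: hx].
rewrite (hdist T (F D l) A hT hFL hAL) in e1.
have h1 : ivl R (@top S) (smeet T (F D l)).
  split => //; [exact: smeet_subring hTs (F_subring D l hDs) | move=> x hx; split; [exact: hRT | exact: ss_trans hRD (F_incl) _ hx]].
have h2 : ivl R (@top S) (smeet T A).
  split => //; [exact: smeet_subring | move=> x hx; split; [exact: hRT | exact: ss_trans hRD hDA _ hx]].
case: (hirr _ _ h1 h2 e1) => e.
- have [A' [hA' ->]] : exists A', List.In A' l /\ T = A'.
    apply: IH; first by move=> A' hA'; apply: hl; right.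
    by rewrite e => x [].
  by exists A'; split => //; right.
- have hTA : ssubset T A by rewrite e => x [].
  have hiv : ivl D A T by split.
  case: (hmin T hiv) => eT; first by case: hTD.
  by exists A; split => //; left.
Qed.

Lemma loewy_sub i : is_subring (loewy R i).
Proof. case: i => [|i] //=; exact: gen_subring. Qed.

Lemma loewy_step {i} : ssubset (loewy R i) (loewy R i.+1).
Proof. by move=> x hx; apply: gen_incl; left. Qed.

Lemma loewy_mono {i j} : (i <= j)%N -> ssubset (loewy R i) (loewy R j).
Proof.
move=> /subnKC <-; elim: (j - i) => [|k IH]; first by rewrite addn0; apply: ss_refl.
by rewrite addnS; apply: ss_trans IH loewy_step.
Qed.

Lemma loewy_L i : ivl R (@top S) (loewy R i).
Proof. split => //; [exact: loewy_sub | exact: (loewy_mono (leq0n i))]. Qed.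

Lemma loewy_stable {k} m : loewy R k = loewy R k.+1 -> loewy R (k + m) = loewy R k.
Proof.
move=> h; elim: m => [|m IH]; first by rewrite addn0.
by rewrite addnS /= IH; exact: (esym h).
Qed.

Lemma irr_is_atom {j T} : FCP R -> distributive_ext R ->
  ivl R (@top S) T -> Pi_irreducible R T ->
  ivl (loewy R j) (loewy R j.+1) T -> T <> loewy R j ->
  is_atom (loewy R j) (loewy R j.+1) T.
Proof.
move=> hF hdist hT hirr [hTs hlo hhi] hne.
have [l [hl e]] := socle_fin hF (loewy_L j).
have hTF : ssubset T (F (loewy R j) l) by rewrite -e; exact: hhi.
have [A [hA eA]] := irr_atom hdist (loewy_L j) hl hT hirr hlo hne hTF.
have [hAs [hmin _]] := hl A hA.
by split => //; split => //; rewrite eA.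
Qed.

End WithR.
End Aux.

Theorem theorem8p6 (S : comPzRingType) (R : S -> Prop) (n : nat) :
  is_subring R -> R <> @top S ->
  FCP R -> distributive_ext R ->
  loewy R n = @top S -> (forall m, (m < n)%N -> loewy R m <> @top S) ->
  (P_ext R n <->
   (forall T, ivl R (@top S) T -> T <> R ->
      (Pi_irreducible R T <->
       exists i, (i < n)%N /\ is_atom (loewy R i) (loewy R i.+1) T))).
Proof.
move=> hR hRS hF hD hn hlt.
have n_pos : (0 < n)%N.
  case: n hn hlt => [h _|n0 _ _]; [exact: False_ind _ (hRS h) | exact: erefl].
have hneq k : (k < n)%N -> loewy R k <> loewy R k.+1.
  move=> hk heq; have := loewy_stable S R (n - k) heq.
  rewrite subnKC; last exact: ltnW.
  rewrite hn => e; apply: (hlt k hk); by rewrite -e.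
split.
- move=> HP T hT hTR; split.
  + move=> hirr; have [j [hj hjT]] := HP T hT.
    case: (classic (T = loewy R j)) => hTj.
    * case: j hj hjT hTj => [|j] hj hjT hTj; first by case: hTR; exact: hTj.
      exists j; split; first exact: ltnW.
      apply: irr_is_atom => //.
      -- rewrite hTj; split; [exact: loewy_sub | exact: loewy_step | exact: ss_refl].
      -- by rewrite hTj => e; apply: (hneq j (ltnW hj)); rewrite e.
    * by exists j; split => //; apply: irr_is_atom.
  + case=> i [hi [hsT [[hle hne hmin] hTle]]] T1 T2 h1 h2 hT12.
    apply: NNPP => hno; have [n1 n2] := not_or_and _ _ hno.
    have key U : ivl R (@top S) U -> ssubset U T -> U <> T ->
        ~ ssubset U (loewy R i) -> False.
      move=> hU hUT hUne hnot; have [k [hk [_ hlo hhi]]] := HP U hU.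
      case: (ltngtP k i) => hki.
      * by apply: hnot; apply: ss_trans _ hhi (loewy_mono S R hki).
      * apply: hUne; apply: pext => //.
        exact: ss_trans _ hTle (ss_trans _ (loewy_mono S R hki) hlo).
      * subst k; have hiv : ivl (loewy R i) T U.
          by case: hU => hUs _ _; split.
        case: (hmin U hiv) => e.
        -- by apply: hnot; rewrite e; apply: ss_refl.
        -- by apply: hUne.
    have s1 : ssubset T1 T by rewrite hT12; apply: sprod_l.
    have s2 : ssubset T2 T by rewrite hT12; apply: sprod_r.
    case: (classic (ssubset T1 (loewy R i))) => c1; last first.
      by apply: (key T1 h1 s1) => // e; apply: n1.
    case: (classic (ssubset T2 (loewy R i))) => c2; last first.
      by apply: (key T2 h2 s2) => // e; apply: n2.
    apply: hne; apply: pext => //.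
    by rewrite hT12; apply: sprod_min => //; apply: loewy_sub.
- move=> H T hT.
  move: T hT; apply: (@fcp_wf S R false hF
    (fun T => exists i, (i < n)%N /\ ivl (loewy R i) (loewy R i.+1) T))
    => T hT IH.
  case: (classic (T = R)) => hTR.
    exists 0%N; split => //; rewrite hTR; split; [exact: hR | exact: ss_refl | exact: (@loewy_step S R 0)].
  case: (classic (Pi_irreducible R T)) => hirr.
    have [i [hi [hs [[hle _ _] hTle]]]] := proj1 (H T hT hTR) hirr.
    by exists i; split => //; split.
  have [T1 [T2 [h1 [h2 [e [n1 n2]]]]]] : exists T1 T2, ivl R (@top S) T1 /\
      ivl R (@top S) T2 /\ T = sprod T1 T2 /\ T <> T1 /\ T <> T2.
    apply: NNPP => hne; apply: hirr => T1 T2 h1 h2 e; apply: NNPP => hno.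
    apply: hne; exists T1, T2; have [n1 n2] := not_or_and _ _ hno; by [].
  have s1 : ssubset T1 T by rewrite e; apply: sprod_l.
  have s2 : ssubset T2 T by rewrite e; apply: sprod_r.
  have [a [ha [_ ha2 ha3]]] := IH T1 h1 s1 n1.
  have [b [hb [_ hb2 hb3]]] := IH T2 h2 s2 n2.
  have hTs : is_subring T by rewrite e; apply: sprod_subring.
  case: (leqP a b) => hab.
  + exists b; split => //; split => //; first exact: ss_trans _ hb2 s2.
    rewrite e; apply: sprod_min => //; first exact: loewy_sub.
    exact: ss_trans _ ha3 (@loewy_mono S R a.+1 b.+1 hab).
  + exists a; split => //; split => //; first exact: ss_trans _ ha2 s1.
    rewrite e; apply: sprod_min => //; first exact: loewy_sub.
    exact: ss_trans _ hb3 (@loewy_mono S R b.+1 a.+1 (ltnW hab)).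
Qed.
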